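(* Let $J$ be a $k$-graph on a vertex set $V$ and $M$ a perfect matching in $J$. Let $b,c,c' \in \mathbb N$ and $u, v \in V$ be such that $(J, M)$ contains a $b$-fold $(u,v)$-transferral of size $c$, and $(J, M)$ contains a simple $(v,u)$-transferral of size $c'$. Then $(J, M)$ contains a simple $(u,v)$-transferral of size $(b-1)c'+c$.
   Context: For $S\subseteq V$, $\chi(S)\in\mathbb R^{V}$ is its characteristic vector, and for a multiset $T$ of subsets, $\chi(T)=\sum_{e\in T}\chi(e)$ (with multiplicity). For $b\in\mathbb N$ and $u,v\in V$, a $b$-fold $(u,v)$-transferral in $(J,M)$ is a pair $(T,T')$ where $T$ is a multiset of edges of $J$ and $T'$ a multiset of edges of $M$ with $\chi(T)-\chi(T')=b(\chi(\{u\})-\chi(\{v\}))$; then $|T|=|T'|$, and this common value is its size. A simple transferral is a $1$-fold transferral. *)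

(* Defs.v *)
From mathcomp Require Import all_boot all_algebra.
Set Implicit Arguments. Unset Strict Implicit. Unset Printing Implicit Defensive.
Import GRing.Theory Num.Theory.
Local Open Scope ring_scope.

Definition kgraph (V : finType) (k : nat) (J : {set {set V}}) : Prop :=
  forall e, e \in J -> #|e| = k.

Definition perfect_matching (V : finType) (J M : {set {set V}}) : Prop :=
  [/\ M \subset J,
      (forall e f, e \in M -> f \in M -> e != f -> [disjoint e & f]) &
      (forall x : V, exists2 e, e \in M & x \in e)].

(* chi(T) evaluated at x, for a multiset T of edges (a seq, with multiplicity) *)
Definition chi (V : finType) (T : seq {set V}) (x : V) : int :=
  (count (fun e : {set V} => x \in e) T)%:Z.

Definition transferral (V : finType) (J M : {set {set V}}) (b : nat) (u v : V)
    (T T' : seq {set V}) : Prop :=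
  [/\ all (fun e : {set V} => e \in J) T, all (fun e : {set V} => e \in M) T' &
      forall x : V, chi T x - chi T' x =
        (b%:Z) * ((x == u)%:Z - (x == v)%:Z)].

Definition has_transferral (V : finType) (J M : {set {set V}}) (b : nat)
    (u v : V) (c : nat) : Prop :=
  exists T T', transferral J M b u v T T' /\ size T = c.

(* Main.v *)
Require Import Defs.
From mathcomp Require Import all_boot all_algebra zify.
Import GRing.Theory Num.Theory.

Lemma count_rep (T : eqType) (p : pred T) n (s : seq T) :
  count p (flatten (nseq n s)) = (n * count p s)%N.
Proof. elim: n => [|n IH] //=; by rewrite count_cat IH mulSn. Qed.

Lemma size_rep (T : Type) n (s : seq T) :
  size (flatten (nseq n s)) = (n * size s)%N.
Proof. elim: n => [|n IH] //=; by rewrite size_cat IH mulSn. Qed.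

Lemma all_rep (T : Type) (p : pred T) n (s : seq T) :
  all p s -> all p (flatten (nseq n s)).
Proof. move=> h; elim: n => [|n IH] //=; by rewrite all_cat h IH. Qed.

Theorem lemma4p4 (V : finType) (k : nat) (J M : {set {set V}})
  (b c c' : nat) (u v : V) :
  (0 < b)%N ->
  kgraph k J -> perfect_matching J M ->
  has_transferral J M b u v c ->
  has_transferral J M 1 v u c' ->
  has_transferral J M 1 u v ((b - 1) * c' + c).
Proof.
move=> b0 _ _ [T [T' [[hT hT' hx] sT]]] [S [S' [[hS hS' hy] sS]]].
exists (T ++ flatten (nseq (b-1) S)), (T' ++ flatten (nseq (b-1) S')); split; last first.
  by rewrite size_cat size_rep sS sT addnC.
split; first by rewrite all_cat hT all_rep.
  by rewrite all_cat hT' all_rep.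
move=> x; case: b b0 hx => // b _ hx; rewrite subSS subn0; move: (hx x) (hy x); rewrite /chi !count_cat !count_rep.
rewrite !PoszD !PoszM.
move: (count _ T) (count _ T') (count _ S) (count _ S') => a1 a2 a3 a4.
case: (x == u); case: (x == v) => /=.
all: lia.
Qed.
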